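(* For every constant positive integer $m$ there exist constants $C,c>0$ such that the following holds. Let $A$ be a finite set with $|A|=n$, let $S\subseteq A$, and let $s_1,\dots,s_m$ be positive integers with $s_1+\dots+s_m\le n$. Let $(A_1,\dots,A_m)$ be chosen uniformly at random among all tuples of pairwise disjoint subsets of $A$ with $|A_i|=s_i$ for all $i$. Then \[\Pr\left[\ \left||A_i\cap S|-|A_i|\frac{|S|}{|A|}\right|\le C \text{ for all } i\in[m]\right]\ \ge\ n^{-c}.\] *)

(* Defs.v *)
From mathcomp Require Import all_boot.
From Stdlib Require Import Reals.

Set Implicit Arguments.
Unset Strict Implicit.
Unset Printing Implicit Defensive.

Definition Rleb (x y : R) : bool := if Rle_dec x y then true else false.

Definition valid_tuple (T : finType) (A : {set T}) (m : nat) (s : 'I_m -> nat)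
  (f : {ffun 'I_m -> {set T}}) : bool :=
  [forall i, (f i \subset A) && (#|f i| == s i)] &&
  [forall i, forall j, (i != j) ==> [disjoint f i & f j]].

Definition tuples (T : finType) (A : {set T}) (m : nat) (s : 'I_m -> nat)
  : {set {ffun 'I_m -> {set T}}} := [set f | valid_tuple A s f].

Definition good_tuples (T : finType) (A S : {set T}) (m : nat) (s : 'I_m -> nat)
  (C : R) : {set {ffun 'I_m -> {set T}}} :=
  [set f in tuples A s |
    [forall i, Rleb (Rabs (INR #|f i :&: S| - INR #|f i| * INR #|S| / INR #|A|)) C]].

Definition prob_good (T : finType) (A S : {set T}) (m : nat) (s : 'I_m -> nat)
  (C : R) : R :=
  INR #|good_tuples A S s C| / INR #|tuples A s|.

(* Main.v *)
Require Import Defs.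
From mathcomp Require Import all_boot.
From Stdlib Require Import Reals.
From mathcomp Require Import fingroup perm zify.
From Stdlib Require Import Lia Lra.
Set Implicit Arguments. Unset Strict Implicit. Unset Printing Implicit Defensive.
Lemma cardI_sum (T : finType) (P Q : {set T}) :
  #|P :&: Q| = \sum_(z in P) (z \in Q : nat).
Proof.
rewrite -sum1_card (eq_bigl (fun z => (z \in P) && (z \in Q))); last first.
  by move=> z; rewrite inE.
rewrite big_mkcondr /=; apply: eq_bigr => z _; by case: (z \in Q).
Qed.
Lemma card_preim_tperm (T : finType) (x y : T) (P Q : {set T}) :
  #|tperm x y @^-1: P :&: Q| = \sum_(z in P) (tperm x y z \in Q : nat).
Proof.
rewrite cardI_sum (reindex_inj (inv_inj (tpermK x y))) /=.
apply: eq_bigl => z; by rewrite inE tpermK.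
Qed.
Lemma tperm_in (T : finType) (x y z : T) (Q : {set T}) :
  x \in Q -> y \notin Q ->
  (tperm x y z \in Q : nat) + (z == x) = (z \in Q : nat) + (z == y).
Proof.
move=> xQ yQ.
have xy : (x == y) = false by apply/negbTE; apply/eqP => h; move: yQ; rewrite -h xQ.
case: tpermP => [e|e|/eqP zx /eqP zy]; rewrite ?e.
- by rewrite (negbTE yQ) xQ eqxx xy.
- by rewrite (negbTE yQ) xQ eqxx eq_sym xy.
- by rewrite (negbTE zx) (negbTE zy).
Qed.
Lemma sum_eq1 (T : finType) (P : {set T}) (x : T) :
  \sum_(z in P) (z == x : nat) = (x \in P).
Proof.
case xP: (x \in P).
  rewrite (bigD1 x) //= eqxx big1 // => z /andP [_ /negbTE ->] //.
by rewrite big1 // => z zP; case: eqP => // e; rewrite -e zP in xP.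
Qed.
Lemma swap_count (T : finType) (x y : T) (P Q : {set T}) :
  x \in Q -> y \notin Q ->
  #|tperm x y @^-1: P :&: Q| + (x \in P) = #|P :&: Q| + (y \in P).
Proof.
move=> xQ yQ; rewrite card_preim_tperm cardI_sum -!sum_eq1 -!big_split /=.
by apply: eq_bigr => z _; apply: tperm_in.
Qed.

Definition part (T : finType) (A : {set T}) m (f : {ffun 'I_m -> {set T}})
  (o : option 'I_m) : {set T} :=
  if o is Some k then f k else A :\: \bigcup_k f k.

Lemma tuplesP (T : finType) (A : {set T}) m (s : 'I_m -> nat) f :
  f \in tuples A s ->
  (forall i, f i \subset A) /\ (forall i, #|f i| = s i) /\
  (forall i j, i != j -> [disjoint f i & f j]).
Proof.
rewrite inE => /andP [/forallP h1 /forallP h2]; split; last split.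
- by move=> i; case/andP: (h1 i).
- by move=> i; case/andP: (h1 i) => _ /eqP.
- by move=> i j ij; move/forallP: (h2 i) => /(_ j); rewrite ij.
Qed.

Lemma part_sub (T : finType) (A : {set T}) m (s : 'I_m -> nat) f o :
  f \in tuples A s -> part A f o \subset A.
Proof.
case/tuplesP => h1 _; case: o => [k|] /=; first exact: h1.
exact: subsetDl.
Qed.

Lemma disjI (T : finType) (A B : {set T}) :
  (forall z, z \in A -> z \in B -> False) -> [disjoint A & B].
Proof.
move=> h; rewrite disjoint_subset; apply/subsetP => z zA.
by rewrite inE /=; apply/negP => zB; apply: (h z).
Qed.

Lemma part_disj (T : finType) (A : {set T}) m (s : 'I_m -> nat) f o1 o2 :
  f \in tuples A s -> o1 != o2 -> [disjoint part A f o1 & part A f o2].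
Proof.
case/tuplesP => _ [_ h3].
have H : forall k, [disjoint part A f (Some k) & part A f None].
  move=> k /=; rewrite disjoint_sym; apply: disjI => z; rewrite inE => /andP [zn _] zk.
  by move/bigcupP: zn; apply; exists k.
case: o1 => [k1|]; case: o2 => [k2|] // ne.
- by apply: h3; apply: contra ne => /eqP ->.
- all: first [exact: H | rewrite disjoint_sym; exact: H].
Qed.

Lemma part_cover (T : finType) (A : {set T}) m (s : 'I_m -> nat) f :
  f \in tuples A s -> \bigcup_o part A f o = A.
Proof.
move=> ft; apply/setP => z; apply/bigcupP/idP.
  by case=> o _; apply/subsetP; apply: part_sub ft.
move=> zA; case: (boolP (z \in \bigcup_k f k)).
  by case/bigcupP => k _ zk; exists (Some k).
by move=> zn; exists None => //=; rewrite inE zn zA.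
Qed.

Lemma part_sum (T : finType) (A : {set T}) m (s : 'I_m -> nat) f (B : {set T}) :
  f \in tuples A s -> \sum_o #|part A f o :&: B| = #|A :&: B|.
Proof.
move=> ft; rewrite cardI_sum.
rewrite (eq_bigl (fun z => z \in \bigcup_o part A f o)); last by move=> z; rewrite (part_cover ft).
rewrite partition_disjoint_bigcup.
  by apply: eq_bigr => o _; rewrite cardI_sum.
by move=> o1 o2; apply: part_disj ft.
Qed.

Definition swapf (T : finType) m (x y : T) (f : {ffun 'I_m -> {set T}}) :
  {ffun 'I_m -> {set T}} := [ffun k => tperm x y @^-1: f k].

Lemma tperm_A (T : finType) (A : {set T}) (x y z : T) :
  x \in A -> y \in A -> (tperm x y z \in A) = (z \in A).
Proof.
move=> xA yA.
have H : forall w, w \in A -> tperm x y w \in A.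
  by move=> w wA; case: tpermP => // -> .
apply/idP/idP => [h|]; last exact: H.
by rewrite -(tpermK x y z); apply: H.
Qed.

Lemma swapK (T : finType) m (x y : T) (f : {ffun 'I_m -> {set T}}) :
  swapf x y (swapf x y f) = f.
Proof.
apply/ffunP => k; rewrite !ffunE; apply/setP => z; by rewrite !inE tpermK.
Qed.

Lemma part_swap (T : finType) (A : {set T}) m (x y : T) (f : {ffun 'I_m -> {set T}}) o :
  x \in A -> y \in A -> part A (swapf x y f) o = tperm x y @^-1: part A f o.
Proof.
move=> xA yA; case: o => [k|] /=; first by rewrite ffunE.
apply/setP => z; rewrite !inE (tperm_A z xA yA); case: (z \in A); rewrite ?andbF ?andbT //; f_equal.
apply/bigcupP/bigcupP => [[k _]|[k _]]; rewrite ?ffunE ?inE => h; by exists k; rewrite ?ffunE ?inE.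
Qed.

Lemma swap_tuples (T : finType) (A : {set T}) m (s : 'I_m -> nat) f (x y : T) :
  f \in tuples A s -> x \in A -> y \in A -> swapf x y f \in tuples A s.
Proof.
move=> ft xA yA; case/tuplesP: ft => h1 [h2 h3].
rewrite inE; apply/andP; split; apply/forallP => i.
  rewrite ffunE card_preimset ?h2 ?eqxx ?andbT; last exact: perm_inj.
  apply/subsetP => z; rewrite inE => /(subsetP (h1 i)); by rewrite tperm_A.
apply/forallP => j; apply/implyP => ij; rewrite !ffunE.
apply: disjI => z; rewrite !inE => zi zj.
by move: (h3 i j ij); rewrite disjoint_subset => /subsetP /(_ _ zi); rewrite inE /= zj.
Qed.
Lemma sum_ind (T : finType) (B : {pred T}) : \sum_(p : T) (p \in B : nat) = #|B|.
Proof. rewrite -sum1_card [RHS]big_mkcond; apply: eq_bigr => p _; by case: (p \in B). Qed.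

Lemma card_trip (F T : finType) (C : {set F}) (X Y : F -> {set T}) a b :
 (forall f, f \in C -> #|X f| = a /\ #|Y f| = b) ->
 #|[set t : F * (T * T) | (t.1 \in C) && (t.2 \in setX (X t.1) (Y t.1))]| = #|C| * (a * b).
Proof.
move=> h.
rewrite -sum_ind (eq_bigr (fun t => ((t.1 \in C) && (t.2 \in setX (X t.1) (Y t.1)) : nat))); last first.
  by move=> t _; rewrite inE.
rewrite -(pair_bigA _ (fun f p => ((f \in C) && (p \in setX (X f) (Y f)) : nat))) /=.
rewrite -sum_ind big_distrl /=; apply: eq_bigr => f _.
case fC: (f \in C); last by rewrite big1.
have [ha hb] := h f fC.
rewrite mul1n -ha -hb -cardsX -sum_ind; by apply: eq_bigr.
Qed.

Definition vecf (T : finType) (A S : {set T}) m (f : {ffun 'I_m -> {set T}}) :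
  {ffun option 'I_m -> 'I_#|A|.+1 * 'I_#|A|.+1} :=
  [ffun o => (inord #|part A f o :&: S|, inord #|part A f o :\: S|)].

Definition cls (T : finType) (A S : {set T}) m (s : 'I_m -> nat)
  (v : {ffun option 'I_m -> 'I_#|A|.+1 * 'I_#|A|.+1}) :=
  [set f in tuples A s | vecf A S f == v].

Arguments vecf {T} A S {m} f.
Arguments cls {T} A S {m} s v.

Lemma part_le (T : finType) (A : {set T}) m (s : 'I_m -> nat) f o :
  f \in tuples A s -> #|part A f o| <= #|A|.
Proof. by move=> ft; apply: subset_leq_card; apply: part_sub ft. Qed.

Lemma cls_counts (T : finType) (A S : {set T}) m (s : 'I_m -> nat) v f :
  f \in cls A S s v -> f \in tuples A s /\ forall o,
    #|part A f o :&: S| = (v o).1 /\ #|part A f o :\: S| = (v o).2.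
Proof.
rewrite inE => /andP [ft /eqP <-]; split => // o; rewrite ffunE /=.
have h := part_le o ft; have := cardsID S (part A f o) => e.
rewrite !inordK // ltnS (leq_trans _ h) // -e ?leq_addr ?leq_addl //.
Qed.

Definition shift n m (v : {ffun option 'I_m -> 'I_n.+1 * 'I_n.+1}) (j i : option 'I_m) :
  {ffun option 'I_m -> 'I_n.+1 * 'I_n.+1} :=
  [ffun o => (inord ((v o).1 + (o == i) - (o == j)), inord ((v o).2 + (o == j) - (o == i)))].

Lemma swap_vec (T : finType) (A S : {set T}) m (s : 'I_m -> nat) v f j i (x y : T) :
  f \in cls A S s v -> j != i -> x \in part A f j :&: S -> y \in part A f i :\: S ->
  swapf x y f \in cls A S s (shift v j i) /\
  x \in part A (swapf x y f) i :&: S /\ y \in part A (swapf x y f) j :\: S.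
Proof.
move=> fc ji; have [ft hc] := cls_counts fc.
rewrite !inE => /andP [xj xS] /andP [yS yi].
have xA : x \in A by apply: (subsetP (part_sub j ft)).
have yA : y \in A by apply: (subsetP (part_sub i ft)).
have gt := swap_tuples ft xA yA.
have pg := fun o => part_swap f o xA yA.
have hx : forall o, (x \in part A f o) = (o == j).
  move=> o; case: (eqVneq o j) => [->|ne]; first exact: xj.
  by apply: (disjointFr (part_disj ft _) xj); rewrite eq_sym.
have hy : forall o, (y \in part A f o) = (o == i).
  move=> o; case: (eqVneq o i) => [->|ne]; first exact: yi.
  by apply: (disjointFr (part_disj ft _) yi); rewrite eq_sym.
split; last by rewrite !pg !inE tpermL tpermR yi xj xS yS.
apply/andP; split; first by move: gt; rewrite inE.
apply/eqP/ffunP => o; rewrite !ffunE pg.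
have [c1 c2] := hc o.
have e1 := swap_count (part A f o) xS yS.
have e2 : #|tperm x y @^-1: part A f o :\: S| + (y \in part A f o)
          = #|part A f o :\: S| + (x \in part A f o).
  rewrite !setDE tpermC; apply: swap_count; by rewrite inE ?xS ?yS.
rewrite hx hy in e1 e2.
by rewrite -c1 -c2 -e1 -e2 !addnK.
Qed.

Lemma transfer (T : finType) (A S : {set T}) m (s : 'I_m -> nat) v j i :
  j != i ->
  #|cls A S s v| * ((v j).1 * (v i).2) <=
  #|cls A S s (shift v j i)| * (((v i).1).+1 * ((v j).2).+1).
Proof.
move=> ji.
case: (posnP (#|cls A S s v| * ((v j).1 * (v i).2))) => [->//|pos].
have : 0 < #|cls A S s v| by move: pos; rewrite !muln_gt0 => /andP[].
rewrite card_gt0 => /set0Pn [f0 f0c].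
have [ft0 hc0] := cls_counts f0c.
have bi : ((v i).1).+1 <= #|A|.
  have [a1 a2] := hc0 i; have := cardsID S (part A f0 i); rewrite a1 a2 => e.
  apply: leq_trans (part_le i ft0); rewrite -e -addn1 leq_add2l.
  by move: pos; rewrite !muln_gt0 => /and3P[].
have bj : ((v j).2).+1 <= #|A|.
  have [a1 a2] := hc0 j; have := cardsID S (part A f0 j); rewrite a1 a2 => e.
  apply: leq_trans (part_le j ft0); rewrite -e -add1n leq_add2r.
  by move: pos; rewrite !muln_gt0 => /and3P[].
have ij : (i == j) = false by apply/negbTE; rewrite eq_sym.
have c1 := @card_trip _ _ (cls A S s v) (fun f => part A f j :&: S)
   (fun f => part A f i :\: S) (v j).1 (v i).2.
have c2 := @card_trip _ _ (cls A S s (shift v j i)) (fun f => part A f i :&: S)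
   (fun f => part A f j :\: S) ((v i).1).+1 ((v j).2).+1.
rewrite -c1; last first.
  by move=> f fc; have [_ h] := cls_counts fc; have [h1 _] := h j; have [_ h2] := h i.
rewrite -c2; last first.
  move=> f fc; have [_ h] := cls_counts fc; have [h1 _] := h i; have [_ h2] := h j.
  rewrite h1 h2 !ffunE /= !eqxx ij (negbTE ji) /= ?addn1 ?addn0 ?subn0 !inordK //.
pose phi (t : {ffun 'I_m -> {set T}} * (T * T)) := (swapf t.2.1 t.2.2 t.1, t.2).
have phi_inj : injective phi.
  move=> [f1 [x y]] [f' [x' y']] [e1 e2 e3]; subst x' y'.
  by rewrite -(swapK x y f1) e1 swapK.
rewrite -(card_imset _ phi_inj); apply: subset_leq_card; apply/subsetP => t'.
case/imsetP => [[f1 [x y]]]; rewrite inE /= => /andP [fc /setXP [xin yin]] ->.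
have [g1 [g2 g3]] := swap_vec fc ji xin yin.
by rewrite inE /= g1 /=; apply/setXP; split.
Qed.

Lemma card_setIn (T : finType) (X : {set T}) (p : pred T) :
  #|[set x in X | p x]| = \sum_(x in X) (p x : nat).
Proof.
rewrite -sum1_card (eq_bigl (fun z => (z \in X) && p z)); last first.
  by move=> z; rewrite inE.
rewrite big_mkcondr /=; apply: eq_bigr => z _; by case: (p z).
Qed.

Lemma tuples_sum (T : finType) (A S : {set T}) m (s : 'I_m -> nat) :
  #|tuples A s| = \sum_v #|cls A S s v|.
Proof.
rewrite -sum1_card.
rewrite (eq_bigr (fun f => \sum_v (vecf A S f == v : nat))); last first.
  move=> f _; rewrite (bigD1 (vecf A S f)) //= eqxx big1 // => v.
  by rewrite eq_sym => /negbTE ->.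
rewrite exchange_big /=; apply: eq_bigr => v _.
by rewrite /cls card_setIn.
Qed.
Lemma up n sig M ki li : 0 < n -> sig <= n -> ki + li <= n ->
  ki * (n + M) <= (sig + M) * (ki + li + 1) ->
  n * ki <= (ki + li) * sig + n * M.+1.
Proof.
move=> n0 h1 h2 H.
have a1 : n * sig <= n * n by rewrite leq_mul2l h1 orbT.
have a2 : n * M * (ki + li) <= n * M * n by rewrite leq_mul2l h2 orbT.
have a3 : n * M <= n * M * M.+1 by rewrite leq_pmulr.
have a4 : n * (ki * (n + M)) <= n * ((sig + M) * (ki + li + 1)) by rewrite leq_mul2l H orbT.
have : (n + M) * (n * ki) <= (n + M) * ((ki + li) * sig + n * M.+1) by nia.
by rewrite leq_pmul2l // addn_gt0 n0.
Qed.
Lemma lo n sig M ki li : 0 < n -> sig <= n -> ki + li <= n ->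
  sig * (ki + li + 1) <= (ki + 1) * (n + M) ->
  (ki + li) * sig <= n * ki + n * M.+1.
Proof.
move=> n0 h1 h2 H.
have b1 : M * (ki + li) * sig <= M * n * n by rewrite -mulnA -mulnA leq_mul2l; apply/orP; right; apply: leq_mul.
have b2 : n * (sig * (ki + li + 1)) <= n * ((ki + 1) * (n + M)) by rewrite leq_mul2l H orbT.
have : (n + M) * ((ki + li) * sig) <= (n + M) * (n * ki + n * M.+1) by nia.
by rewrite leq_pmul2l // addn_gt0 n0.
Qed.

Lemma sum_opt1 m : \sum_(o : option 'I_m) 1 = m.+1.
Proof. by rewrite sum1_card card_option card_ord. Qed.

Lemma main_nat (T : finType) (A S : {set T}) m (s : 'I_m -> nat) :
  0 < #|A| -> S \subset A -> tuples A s != set0 ->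
  exists v, #|tuples A s| <= expn (#|A|.+1 * #|A|.+1) m.+1 * #|cls A S s v| /\
  forall f, f \in cls A S s v -> forall i : 'I_m,
   #|A| * #|f i :&: S| <= #|f i| * #|S| + #|A| * m.+2 /\
   #|f i| * #|S| <= #|A| * #|f i :&: S| + #|A| * m.+2.
Proof.
move=> n0 SA tne.
pose v0 : {ffun option 'I_m -> 'I_#|A|.+1 * 'I_#|A|.+1} := [ffun _ => (ord0, ord0)].
have [v _ hv] := @arg_maxnP _ v0 xpredT (fun v => #|cls A S s v|) isT.
have Nb : #|tuples A s| <= expn (#|A|.+1 * #|A|.+1) m.+1 * #|cls A S s v|.
  rewrite (@tuples_sum _ A S m s).
  have : \sum_v' #|cls A S s v'| <= \sum_(v' : {ffun option 'I_m -> 'I_#|A|.+1 * 'I_#|A|.+1}) #|cls A S s v|.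
    by apply: leq_sum => v' _; apply: hv.
  by rewrite sum_nat_const card_ffun card_prod card_option !card_ord.
exists v; split => // f fc i.
have [ft hc] := cls_counts fc.
pose k o := nat_of_ord (v o).1; pose l o := nat_of_ord (v o).2.
have opt : forall j i, j != i -> k j * l i <= (k i).+1 * (l j).+1.
  move=> j i' ji.
  have Kp : 0 < #|cls A S s v| by rewrite card_gt0; apply/set0Pn; exists f.
  have := transfer S s v ji; have := hv (shift v j i') isT.
  move=> hK htr; rewrite leqNgt; apply/negP => lt.
  have h1 : #|cls A S s (shift v j i')| * ((k i').+1 * (l j).+1) <= #|cls A S s v| * ((k i').+1 * (l j).+1).
    by rewrite leq_mul2r; apply/orP; right; exact: hK.
  have h2 : #|cls A S s v| * ((k i').+1 * (l j).+1) < #|cls A S s v| * (k j * l i') by rewrite ltn_pmul2l.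
  by have := leq_ltn_trans (leq_trans htr h1) h2; rewrite ltnn.
have F1 : forall j i, k j * (k i + l i + 1) <= (k i + 1) * (k j + l j + 1).
  move=> j i'; case: (eqVneq j i') => [->|ji]; first nia.
  have := opt j i' ji; move=> *; nia.
have F2 : \sum_o k o = #|S|.
  rewrite -(setIidPr SA) -(part_sum S ft); apply: eq_bigr => o _.
  by have [-> _] := hc o.
have F3 : \sum_o (k o + l o + 1) = #|A| + m.+1.
  rewrite big_split /= sum_opt1; congr (_ + _).
  have := part_sum setT ft; rewrite setIT => <-.
  apply: eq_bigr => o _; have [h1 h2] := hc o; by rewrite setIT -(cardsID S) h1 h2.
have [hk hl] := hc (Some i); rewrite /= in hk hl.
have si : #|f i| = k (Some i) + l (Some i) by rewrite -(cardsID S) hk hl.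
rewrite si hk -F2.
set ki := k (Some i); set li := l (Some i).
have H1 : (\sum_o k o) * (ki + li + 1) <= (ki + 1) * (#|A| + m.+1).
  rewrite -F3 big_distrl big_distrr /=; apply: leq_sum => o _; exact: F1.
have H2 : ki * (#|A| + m.+1) <= ((\sum_o k o) + m.+1) * (ki + li + 1).
  have E : \sum_o (k o + 1) = \sum_o k o + m.+1 by rewrite big_split /= sum_opt1.
  rewrite -F3 -E big_distrl big_distrr /=; apply: leq_sum => o _.
  by apply: F1.
have Sn : \sum_o k o <= #|A| by rewrite F2; apply: subset_leq_card.
have sn : ki + li <= #|A| by rewrite -si; apply: subset_leq_card; apply: (part_sub (Some i) ft).
set n := #|A| in H1 H2 Sn sn n0 *; set sig := \sum_o k o in H1 H2 Sn *.
split; [exact: up | exact: lo].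
Qed.

Lemma card_range n a b : a + b <= n ->
  #|[pred k : 'I_n | (a <= k) && (k < a + b)]| = b.
Proof.
move=> h.
rewrite -sum1_card big_mkcond /=.
rewrite (eq_bigr (fun k : 'I_n => ((a <= k) && (k < a + b) : nat))); last first.
  by move=> k _; rewrite inE; case: (_ && _).
rewrite -(big_mkord xpredT (fun k => ((a <= k) && (k < a + b) : nat))).
rewrite (big_cat_nat _ (n := a)) //=; last by lia.
rewrite (big_cat_nat _ (n := a + b) (m := a)) //= ?leq_addr //.
rewrite big_nat_cond big1; last first.
  by move=> k /= /andP [ka _]; rewrite leqNgt ka.
rewrite [X in _ + (_ + X)]big_nat_cond [X in _ + (_ + X)]big1; last first.
  by move=> k /= /andP [h1 _]; move: h1 => /andP [ka _]; rewrite ltnNge ka andbF.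
rewrite big_nat_cond (eq_bigr (fun _ => 1)); last first.
  by move=> k /= /andP [h1 _]; move: h1 => /andP [-> ->].
by rewrite -big_nat_cond sum_nat_const_nat addKn add0n addn0 muln1.
Qed.

Lemma off_le m (s : 'I_m -> nat) (i j : 'I_m) : i < j ->
  \sum_(k < m | k < i) s k + s i <= \sum_(k < m | k < j) s k.
Proof.
move=> ij.
rewrite [X in _ <= X](bigD1 i) //= addnC leq_add2l.
rewrite big_mkcond [X in _ <= X]big_mkcond; apply: leq_sum => k _.
case: ifP => // ki; rewrite (ltn_trans ki ij) /= neq_ltn ki //.
Qed.

Lemma off_tot m (s : 'I_m -> nat) (i : 'I_m) :
  \sum_(k < m | k < i) s k + s i <= \sum_(k < m) s k.
Proof.
rewrite [X in _ <= X](bigD1 i) //= addnC leq_add2l.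
rewrite big_mkcond [X in _ <= X]big_mkcond; apply: leq_sum => k _.
by case: ifP => // ki; rewrite neq_ltn ki.
Qed.

Lemma exists_tuple (T : finType) (A : {set T}) m (s : 'I_m -> nat) :
  \sum_(i < m) s i <= #|A| -> tuples A s != set0.
Proof.
move=> hs.
pose off (i : 'I_m) := \sum_(k < m | k < i) s k.
pose R (i : 'I_m) := [pred k : 'I_#|A| | (off i <= k) && (k < off i + s i)].
pose f := [ffun i => [set enum_val k | k in R i]] : {ffun 'I_m -> {set T}}.
apply/set0Pn; exists f; rewrite inE; apply/andP; split; apply/forallP => i.
  rewrite ffunE; apply/andP; split.
    by apply/subsetP => x /imsetP [k _ ->]; apply: enum_valP.
  rewrite card_imset; last exact: enum_val_inj.
  by rewrite card_range // (leq_trans (off_tot s i)).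
apply/forallP => j; apply/implyP => ij; rewrite !ffunE.
apply: disjI => z /imsetP [k kR ->] /imsetP [k' kR' /enum_val_inj e].
subst k'; move: kR kR'; rewrite !inE => /andP [a1 a2] /andP [b1 b2].
case: (ltngtP i j) => [lt|lt|e]; last by rewrite (val_inj e) eqxx in ij.
- have := off_le s lt; rewrite -/(off i) -/(off j) => h; lia.
- have := off_le s lt; rewrite -/(off i) -/(off j) => h; lia.
Qed.
Open Scope R_scope.
Lemma nat_le_R (a b : nat) : (a <= b)%nat -> (INR a <= INR b)%R.
Proof. by move/leP; apply: le_INR. Qed.

Lemma real_bound (n k s sig C : nat) : (0 < n)%nat ->
  (n * k <= s * sig + n * C)%nat -> (s * sig <= n * k + n * C)%nat ->
  Rabs (INR k - INR s * INR sig / INR n) <= INR C.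
Proof.
move=> n0 h1 h2.
have hn : 0 < INR n by apply: lt_0_INR; apply/ltP.
move/nat_le_R: h1; rewrite plus_INR !mult_INR => h1.
move/nat_le_R: h2; rewrite plus_INR !mult_INR => h2.
set q := INR s * INR sig / INR n.
have nq : INR n * q = INR s * INR sig by rewrite /q; field; lra.
rewrite -nq in h1 h2.
apply: Rabs_le; split; nra.
Qed.

Lemma real_prob (N P g : nat) : (0 < N)%nat -> (0 < P)%nat -> (N <= P * g)%nat ->
  / INR P <= INR g / INR N.
Proof.
move=> N0 P0 h.
have hN : 0 < INR N by apply: lt_0_INR; apply/ltP.
have hP : 0 < INR P by apply: lt_0_INR; apply/ltP.
move/nat_le_R: h; rewrite mult_INR => h.
set a := / INR P; set b := / INR N.
have ha : INR P * a = 1 by rewrite /a; field; lra.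
have hb : INR N * b = 1 by rewrite /b; field; lra.
have a0 : 0 < a by apply: Rinv_0_lt_compat.
have b0 : 0 < b by apply: Rinv_0_lt_compat.
have := Rmult_le_compat_r (a * b) _ _ (Rlt_le _ _ (Rmult_lt_0_compat _ _ a0 b0)) h.
rewrite /Rdiv -/b => h2.
have e1 : INR N * (a * b) = a by rewrite -Rmult_assoc (Rmult_comm (INR N)) Rmult_assoc hb Rmult_1_r.
have e2 : INR P * INR g * (a * b) = INR g * b.
  by rewrite (Rmult_comm (INR P)) Rmult_assoc -(Rmult_assoc (INR P)) ha Rmult_1_l.
lra.
Qed.

Close Scope R_scope.

Lemma pow_expn a b : Nat.pow a b = expn a b.
Proof. elim: b => [|b IH] //=; by rewrite expnS -IH. Qed.

Lemma good_mem (T : finType) (A S : {set T}) m (s : 'I_m -> nat) (f : {ffun 'I_m -> {set T}}) (C : nat) :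
  (0 < #|A|)%nat -> f \in tuples A s ->
  (forall i, #|A| * #|f i :&: S| <= #|f i| * #|S| + #|A| * C /\
             #|f i| * #|S| <= #|A| * #|f i :&: S| + #|A| * C)%nat ->
  f \in good_tuples A S s (INR C).
Proof.
move=> n0 ft h; rewrite /good_tuples inE ft /=; apply/forallP => i.
have [h1 h2] := h i.
rewrite /Rleb; case: Rle_dec => // nle; exfalso; apply: nle.
exact: real_bound.
Qed.

Theorem mainTheorem7 :
  forall m : nat, (0 < m)%N ->
  exists C c : R, (0 < C)%R /\ (0 < c)%R /\
  forall (T : finType) (A S : {set T}) (s : 'I_m -> nat),
    S \subset A ->
    (forall i, 0 < s i)%N ->
    (\sum_(i < m) s i <= #|A|)%N ->
    (prob_good A S s C >= Rpower (INR #|A|) (- c))%R.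
Proof.
move=> m m0; exists (INR m.+2), (INR (4 * m.+1)); split; first by apply: lt_0_INR; lia.
split; first by apply: lt_0_INR; lia.
move=> T A S s SA spos hsum.
have n0 : (0 < #|A|)%nat.
  move: hsum; rewrite (bigD1 (Ordinal m0)) //= => h.
  by apply: leq_trans h; apply: ltn_addr; apply: spos.
have tne := exists_tuple hsum.
have N0 : (0 < #|tuples A s|)%nat by rewrite card_gt0.
have Sn : (#|S| <= #|A|)%nat by apply: subset_leq_card.
have key : (#|tuples A s| <= expn #|A| (4 * m.+1) * #|good_tuples A S s (INR m.+2)|)%nat.
  case: (leqP #|A| m.+2) => small.
    apply: (@leq_trans #|good_tuples A S s (INR m.+2)|); last first.
      by apply: leq_pmull; rewrite expn_gt0 n0.
    apply: subset_leq_card; apply/subsetP => f ft; apply: good_mem => // i.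
    have [h1 [h2 _]] := tuplesP ft.
    have fS : (#|f i :&: S| <= #|A|)%nat.
      by apply: leq_trans (subset_leq_card (subsetIl _ _)) _; apply: subset_leq_card.
    have fA : (#|f i| <= #|A|)%nat by apply: subset_leq_card.
    have e1 : (#|A| * #|f i :&: S| <= #|A| * m.+2)%nat by rewrite leq_mul2l (leq_trans fS small) orbT.
    have e2 : (#|f i| * #|S| <= #|A| * m.+2)%nat.
      apply: leq_trans (leq_mul fA Sn) _; by rewrite leq_mul2l small orbT.
    by split; [apply: leq_trans e1 _; apply: leq_addl | apply: leq_trans e2 _; apply: leq_addl].
  have [v [Nb hv]] := @main_nat _ A S m s n0 SA tne.
  apply: leq_trans Nb _; apply: leq_mul.
    rewrite expnM leq_exp2r //.
    have h : (#|A|.+1 <= #|A| * #|A|)%nat by nia.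
    have -> : (expn #|A| 4 = (#|A| * #|A|) * (#|A| * #|A|))%nat by rewrite !expnS expn0 muln1 !mulnA.
    exact: leq_mul.
  apply: subset_leq_card; apply/subsetP => f fc; have [ft _] := cls_counts fc.
  by apply: good_mem => //; apply: hv.
rewrite /prob_good; apply: Rle_ge.
rewrite (Rpower_Ropp (INR #|A|) (INR (4 * m.+1))).
rewrite (Rpower_pow (4 * m.+1) (INR #|A|)); last by apply: lt_0_INR; apply/ltP.
rewrite -pow_INR pow_expn; apply: real_prob => //.
by rewrite expn_gt0 n0.
Qed.
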